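(* Let $H_B=(V_B,E_B)$ be a 3-uniform hypergraph with $n=|V_B|$ vertices, let $\varepsilon=1/n^{100}$, and let $\{\mathbf v_a\}_{a\in V_B\cup\{\emptyset\}}$ be a feasible solution of the SDP below with respect to which every vertex of $H_B$ is $\varepsilon$-balanced. Then for every edge $\{a,b,c\}\in E_B$, $\|\bar{\mathbf u}_a+\bar{\mathbf u}_b+\bar{\mathbf u}_c\|^2\le 18\varepsilon$.
   Context: SDP: unit vectors $\mathbf v_a\in\mathbb R^d$ for $a\in V_B\cup\{\emptyset\}$ with $\mathbf v_a+\mathbf v_b+\mathbf v_c=-\mathbf v_\emptyset$ for every edge $\{a,b,c\}$. $\gamma_a=\langle\mathbf v_a,\mathbf v_\emptyset\rangle$; vertex $a$ is $\varepsilon$-balanced if $\gamma_a\in[-1/3-\varepsilon,-1/3+\varepsilon]$. For such $a$, $\bar{\mathbf u}_a=\frac{\mathbf v_a-\gamma_a\mathbf v_\emptyset}{\sqrt{1-\gamma_a^2}}$ (the unit vector along the component of $\mathbf v_a$ orthogonal to $\mathbf v_\emptyset$). *)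

(* Defs.v *)
From HB Require Import structures.
From mathcomp Require Import all_boot all_order all_algebra.
Set Implicit Arguments. Unset Strict Implicit. Unset Printing Implicit Defensive.
Import Order.TTheory GRing.Theory Num.Theory.
Local Open Scope ring_scope.

Definition dotv (R : rcfType) (d : nat) (x y : 'rV[R]_d) : R :=
  \sum_(i < d) x 0 i * y 0 i.

Definition sqnorm (R : rcfType) (d : nat) (x : 'rV[R]_d) : R := dotv x x.

(* The SDP vectors are indexed by option V: [None] plays the role of the
   special index "emptyset", [Some a] is the vector of vertex a. *)

Definition three_uniform (V : finType) (E : {set {set V}}) : Prop :=
  forall e, e \in E -> #|e| = 3%N.

Definition sdp_feasible (R : rcfType) (d : nat) (V : finType)
  (E : {set {set V}}) (v : option V -> 'rV[R]_d) : Prop :=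
  (forall x, sqnorm (v x) = 1) /\
  (forall e, e \in E -> \sum_(a in e) v (Some a) = - v None).

Definition gamma (R : rcfType) (d : nat) (V : finType)
  (v : option V -> 'rV[R]_d) (a : V) : R := dotv (v (Some a)) (v None).

Definition balanced (R : rcfType) (d : nat) (V : finType)
  (v : option V -> 'rV[R]_d) (eps : R) (a : V) : Prop :=
  -(1/3) - eps <= gamma v a <= -(1/3) + eps.

Definition ubar (R : rcfType) (d : nat) (V : finType)
  (v : option V -> 'rV[R]_d) (a : V) : 'rV[R]_d :=
  (Num.sqrt (1 - gamma v a ^+ 2))^-1 *: (v (Some a) - gamma v a *: v None).

(* Main.v *)
Require Import Defs.
From HB Require Import structures.
From mathcomp Require Import all_boot all_order all_algebra.
From mathcomp Require Import ring lra.
Import Order.TTheory GRing.Theory Num.Theory.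
Local Open Scope ring_scope.

Section Dot.
Variables (R : rcfType) (d : nat).
Implicit Types x y z : 'rV[R]_d.

Lemma dotvC x y : dotv x y = dotv y x.
Proof. by apply: eq_bigr => i _; rewrite mulrC. Qed.

Lemma dotvDl x y z : dotv (x + y) z = dotv x z + dotv y z.
Proof. by rewrite /dotv -big_split; apply: eq_bigr => i _; rewrite !mxE mulrDl. Qed.

Lemma dotvZl k x y : dotv (k *: x) y = k * dotv x y.
Proof. by rewrite /dotv mulr_sumr; apply: eq_bigr => i _; rewrite !mxE mulrA. Qed.

Lemma dotvNl x y : dotv (- x) y = - dotv x y.
Proof. by rewrite -scaleN1r dotvZl mulN1r. Qed.

Lemma dotvBl x y z : dotv (x - y) z = dotv x z - dotv y z.
Proof. by rewrite dotvDl dotvNl. Qed.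

Lemma dotvNr x y : dotv y (- x) = - dotv y x.
Proof. by rewrite dotvC dotvNl dotvC. Qed.

Lemma dotvDr x y z : dotv z (x + y) = dotv z x + dotv z y.
Proof. by rewrite dotvC dotvDl !(dotvC z). Qed.

Lemma dotvZr k x y : dotv y (k *: x) = k * dotv y x.
Proof. by rewrite dotvC dotvZl dotvC. Qed.

Lemma dotvBr x y z : dotv z (x - y) = dotv z x - dotv z y.
Proof. by rewrite dotvC dotvBl !(dotvC z). Qed.

Lemma sqnorm_ge0 x : 0 <= sqnorm x.
Proof. by apply: sumr_ge0 => i _; rewrite -expr2 sqr_ge0. Qed.

Lemma sqnorm3 x y z :
  sqnorm (x + y + z) <= 3 * (sqnorm x + sqnorm y + sqnorm z).
Proof.
have h1 := sqnorm_ge0 (x - y).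
have h2 := sqnorm_ge0 (y - z).
have h3 := sqnorm_ge0 (z - x).
move: h1 h2 h3; rewrite /sqnorm !(dotvDl, dotvDr, dotvNl, dotvNr).
rewrite (dotvC y x) (dotvC z x) (dotvC z y).
move=> h1 h2 h3; lra.
Qed.

End Dot.
Arguments dotvC {R d}.
Arguments sqnorm3 {R d}.
Arguments sqnorm_ge0 {R d}.

Lemma scalar_bound (R : rcfType) (g eps : R) :
  0 < eps -> eps <= 1/3 -> -(1/3) - eps <= g <= -(1/3) + eps ->
  ((Num.sqrt (1 - g ^+ 2))^-1 - (Num.sqrt (8/9))^-1) ^+ 2 * (1 - g ^+ 2)
    <= 2 * eps.
Proof.
move=> e0 e13 /andP [hl hr].
set S := 1 - g ^+ 2.
have S0 : 0 < S by rewrite /S; nra.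
set s := Num.sqrt S; set t := Num.sqrt (8/9).
have s0 : 0 < s by rewrite sqrtr_gt0.
have t0 : 0 < t by rewrite sqrtr_gt0; lra.
have ss : s ^+ 2 = S by rewrite sqr_sqrtr // ltW.
have tt : t ^+ 2 = 8/9 by rewrite sqr_sqrtr //; lra.
have -> : (s^-1 - t^-1) ^+ 2 * S = (t - s) ^+ 2 / t ^+ 2.
  by rewrite -ss; field; apply/andP; split; rewrite gt_eqF.
have hd : (g ^+ 2 - 1/9) ^+ 2 <= eps ^+ 2.
  have : `|g ^+ 2 - 1/9| <= eps.
    rewrite ler_norml; apply/andP; split; nra.
  move=> h; rewrite -real_normK ?num_real //.
  by rewrite lerXn2r ?nnegrE ?normr_ge0 // ltW.
have key : (t - s) ^+ 2 * t ^+ 2 <= (g ^+ 2 - 1/9) ^+ 2.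
  have -> : (g ^+ 2 - 1/9) ^+ 2 = (t - s) ^+ 2 * (t + s) ^+ 2.
    by rewrite -exprMn; congr (_ ^+ 2); rewrite -subr_sqr ss tt /S; field.
  apply: ler_wpM2l; first by rewrite sqr_ge0.
  by rewrite lerXn2r ?nnegrE; nra.
rewrite ler_pdivrMr ?exprn_gt0 //.
rewrite tt; move: key; rewrite tt => key.
have : (t - s) ^+ 2 <= (81/64) * eps ^+ 2 by nra.
nra.
Qed.

Lemma sum3 (V : finType) (e : {set V}) :
  #|e| = 3%N -> exists a b c,
    [/\ a \in e, b \in e, c \in e &
     forall (M : zmodType) (G : V -> M), \sum_(i in e) G i = G a + G b + G c].
Proof.
move=> he.
have : (2 < #|e|)%N by rewrite he.
case/card_gt2P => a [b [c [[ha hb hc] [nab nbc nca]]]].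
exists a, b, c; split => // M G.
have sub : (a |: (b |: [set c])) \subset e.
  apply/subsetP => x; rewrite !inE. move=> hx. case: (or3P hx) => /eqP -> //.
have c3 : #|(a |: (b |: [set c]))| = 3%N.
  rewrite !cardsU1 cards1 !inE negb_or nab eq_sym nca /=.
  by rewrite (negbTE nbc).
have -> : e = (a |: (b |: [set c])).
  by apply/esym/eqP; rewrite eqEcard sub he c3.
rewrite big_setU1 ?inE ?negb_or ?nab //= ?(eq_sym a c) ?nca //.
by rewrite big_setU1 ?inE //= big_set1 addrA.
Qed.

Lemma vertex_bound (R : rcfType) (d : nat) (V : finType)
  (v : option V -> 'rV[R]_d) (eps : R) (x : V) :
  (forall y, sqnorm (v y) = 1) ->
  0 < eps -> eps <= 1/3 -> balanced v eps x ->
  sqnorm (ubar v x - (Num.sqrt (8/9))^-1 *: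
            (v (Some x) - gamma v x *: v None)) <= 2 * eps.
Proof.
move=> hn e0 e13 hb.
have -> : ubar v x - (Num.sqrt (8/9))^-1 *: (v (Some x) - gamma v x *: v None)
  = ((Num.sqrt (1 - gamma v x ^+ 2))^-1 - (Num.sqrt (8/9))^-1) *:
      (v (Some x) - gamma v x *: v None) by rewrite scalerBl.
have hw : sqnorm (v (Some x) - gamma v x *: v None) = 1 - gamma v x ^+ 2.
  rewrite /sqnorm !(dotvBl, dotvBr, dotvZl, dotvZr).
  rewrite (dotvC (v None)) -/(gamma v x).
  have h1 := hn (Some x); have h2 := hn None; rewrite /sqnorm in h1 h2.
  rewrite h1 h2 /gamma; ring.
rewrite /sqnorm dotvZl dotvZr -/(sqnorm _) hw mulrA -expr2.
exact: scalar_bound.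
Qed.

Theorem lemma4p1 (R : rcfType) (d : nat) (V : finType)
  (E : {set {set V}}) (v : option V -> 'rV[R]_d) :
  three_uniform E ->
  sdp_feasible E v ->
  (forall a : V, balanced v (1 / (#|V|%:R ^+ 100)) a) ->
  forall e, e \in E ->
    sqnorm (\sum_(a in e) ubar v a) <= 18 * (1 / (#|V|%:R ^+ 100)).
Proof.
move=> h3 [hn hE] hbal e he.
set eps : R := 1 / (#|V|%:R ^+ 100).
have [a [b [c [ha hb hc hs]]]] := @sum3 V e (h3 e he).
have hN : (3 <= #|V|)%N by rewrite -(h3 e he) max_card.
have N3 : 3 <= (#|V|%:R : R) by rewrite (ler_nat R 3).
have P : 3 <= (#|V|%:R : R) ^+ 100.
  rewrite exprS; apply: (le_trans N3); rewrite ler_peMr ?exprn_ege1 //; lra.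
have e0 : 0 < eps by rewrite /eps divr_gt0 //; lra.
have e13 : eps <= 1/3.
  rewrite /eps ler_pdivrMr; last lra.
  lra.
set k := (Num.sqrt (8/9))^-1 : R.
set w := fun x => v (Some x) - gamma v x *: v None.
have hsum := hE e he.
have hg : \sum_(i in e) gamma v i = -1.
  rewrite (hs _ (fun i => gamma v i)) /gamma -!dotvDl.
  move: hsum; rewrite (hs _ (fun i => v (Some i))) => ->.
  by rewrite dotvNl -/(sqnorm _) hn.
have hw0 : \sum_(i in e) w i = 0.
  rewrite /w sumrB -scaler_suml hg hsum scaleN1r opprK.
  by rewrite addNr.
have -> : \sum_(a in e) ubar v a = \sum_(i in e) (ubar v i - k *: w i).
  by rewrite sumrB -scaler_sumr hw0 scaler0 subr0.
rewrite (hs _ (fun i => ubar v i - k *: w i)).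
apply: le_trans (sqnorm3 _ _ _) _.
have := @vertex_bound R d V v eps a hn e0 e13 (hbal a).
have := @vertex_bound R d V v eps b hn e0 e13 (hbal b).
have := @vertex_bound R d V v eps c hn e0 e13 (hbal c).
rewrite -/k -!/(w _).
move=> hc' hb' ha'; lra.
Qed.
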